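(* Let $n\ge1$, let $x_1,\dots,x_n$ be nonzero real numbers and $a_1,\dots,a_n>0$. Put $P=\sum_{j=1}^n \frac{x_j^2}{a_j}$, $Q=\sum_{j=1}^n a_j$, $$A=\frac{1}{8}\sqrt{PQ}\cdot \sum_{i=1}^n \left(\frac{x_i^2}{a_iP}-\frac{a_i}{Q}\right)^2,$$ $$m=\min_{1\le i\le n}\min\left\{\frac{x_i^2}{a_iP},\frac{a_i}{Q}\right\},\qquad M=\max_{1\le i\le n}\max\left\{\frac{x_i^2}{a_iP},\frac{a_i}{Q}\right\}.$$ Then $$\frac{1}{Q}\left(\frac{A^2}{M^2}+\frac{2A}{M}\sum_{i=1}^n |x_i|\right)\leq \sum_{i=1}^n\frac{x_i^2}{a_i}-\frac{(|x_1|+\dots+|x_n|)^2}{a_1+\dots+a_n}\leq \frac{1}{Q}\left(\frac{A^2}{m^2}+\frac{2A}{m}\sum_{i=1}^n |x_i|\right).$$ *)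

(* Defs.v *)
(* Stdlib reals. Indices are 0..n-1 (paper's 1..n shifted). *)
From Stdlib Require Import Reals.
Open Scope R_scope.

Fixpoint rsum (n : nat) (f : nat -> R) : R :=
  match n with
  | O => 0
  | S k => rsum k f + f k
  end.

Fixpoint rmin_upto (k : nat) (f : nat -> R) : R :=
  match k with
  | O => f O
  | S j => Rmin (rmin_upto j f) (f (S j))
  end.

Fixpoint rmax_upto (k : nat) (f : nat -> R) : R :=
  match k with
  | O => f O
  | S j => Rmax (rmax_upto j f) (f (S j))
  end.

(* Main.v *)
Require Import Defs.
From Stdlib Require Import Reals Lra Lia Psatz.
Open Scope R_scope.

Lemma rsum_ext n f g : (forall i, (i < n)%nat -> f i = g i) -> rsum n f = rsum n g.
Proof. induction n; simpl; intros H; auto. rewrite IHn by (intros; apply H; lia). rewrite H by lia; auto. Qed.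

Lemma rsum_le n f g : (forall i, (i < n)%nat -> f i <= g i) -> rsum n f <= rsum n g.
Proof. induction n; simpl; intros H; [lra|]. assert (H1 := H n ltac:(lia)).
 assert (H2 : rsum n f <= rsum n g) by (apply IHn; intros; apply H; lia). lra. Qed.

Lemma rsum_plus n f g : rsum n (fun i => f i + g i) = rsum n f + rsum n g.
Proof. induction n; simpl; [lra|]. rewrite IHn; lra. Qed.

Lemma rsum_scal n c f : rsum n (fun i => c * f i) = c * rsum n f.
Proof. induction n; simpl; [lra|]. rewrite IHn; lra. Qed.

Lemma rsum_pos n f : (1 <= n)%nat -> (forall i, (i < n)%nat -> 0 < f i) -> 0 < rsum n f.
Proof. induction n; simpl; intros Hn H; [lia|]. destruct n.
 - simpl. specialize (H 0%nat ltac:(lia)). lra.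
 - assert (H1 := H (S n) ltac:(lia)). assert (0 < rsum (S n) f) by (apply IHn; [lia|intros; apply H; lia]). lra. Qed.

Lemma rsum_nonneg n f : (forall i, (i < n)%nat -> 0 <= f i) -> 0 <= rsum n f.
Proof. induction n; simpl; intros H; [lra|]. assert (H1 := H n ltac:(lia)).
 assert (0 <= rsum n f) by (apply IHn; intros; apply H; lia). lra. Qed.

Lemma rmin_le k f i : (i <= k)%nat -> rmin_upto k f <= f i.
Proof. induction k; simpl; intros H.
 - replace i with 0%nat by lia. lra.
 - destruct (Nat.eq_dec i (S k)). subst. apply Rmin_r.
   eapply Rle_trans. apply Rmin_l. apply IHk. lia. Qed.

Lemma rmin_pos k f : (forall i, (i <= k)%nat -> 0 < f i) -> 0 < rmin_upto k f.
Proof. induction k; simpl; intros H. apply H; lia.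
 apply Rmin_glb_lt. apply IHk; intros; apply H; lia. apply H; lia. Qed.

Lemma rmax_ge k f i : (i <= k)%nat -> f i <= rmax_upto k f.
Proof. induction k; simpl; intros H.
 - replace i with 0%nat by lia. lra.
 - destruct (Nat.eq_dec i (S k)). subst. apply Rmax_r.
   eapply Rle_trans. apply IHk. lia. apply Rmax_l. Qed.

Lemma sq_pos (x : R) : x <> 0 -> 0 < x ^ 2.
Proof. intros H. simpl. rewrite Rmult_1_r. apply (Rsqr_pos_lt x H). Qed.

Lemma amgm p q t : 0 < p -> 0 < q -> 0 <= t -> t * t = p * q -> 0 <= p + q - 2 * t.
intros. destruct (Rle_lt_dec 0 (p + q - 2 * t)) as [h|h]; [exact h|].
assert (0 <= (p - q) * (p - q)) by (apply Rle_0_sqr).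
assert ((p + q - 2 * t) * (p + q + 2 * t) < 0). apply Rmult_neg_pos; lra. nra. Qed.

Lemma key_lo p q t m : 0 < m -> m <= p -> m <= q -> 0 <= t -> t * t = p * q ->
  4 * m * (p + q - 2 * t) <= (p - q) ^ 2.
Proof. intros. assert (m <= t) by nra. assert (0 <= p + q - 2 * t) by (apply amgm; lra).
 replace ((p - q) ^ 2) with ((p + q - 2 * t) * (p + q + 2 * t)) by nra. nra. Qed.

Lemma key_hi p q t M : 0 < p -> 0 < q -> p <= M -> q <= M -> 0 <= t -> t * t = p * q ->
  (p - q) ^ 2 <= 4 * M * (p + q - 2 * t).
Proof. intros. assert (t <= M) by nra. assert (0 <= p + q - 2 * t) by (apply amgm; lra).
 replace ((p - q) ^ 2) with ((p + q - 2 * t) * (p + q + 2 * t)) by nra. nra. Qed.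

Theorem mainTheorem5 (n : nat) (x a : nat -> R)
  (hn : (1 <= n)%nat)
  (hx : forall i, (i < n)%nat -> x i <> 0)
  (ha : forall i, (i < n)%nat -> 0 < a i) :
  let P := rsum n (fun j => x j ^ 2 / a j) in
  let Q := rsum n (fun j => a j) in
  let A := / 8 * sqrt (P * Q) *
           rsum n (fun i => (x i ^ 2 / (a i * P) - a i / Q) ^ 2) in
  let m := rmin_upto (n - 1) (fun i => Rmin (x i ^ 2 / (a i * P)) (a i / Q)) in
  let M := rmax_upto (n - 1) (fun i => Rmax (x i ^ 2 / (a i * P)) (a i / Q)) in
  let S := rsum n (fun i => Rabs (x i)) in
  / Q * (A ^ 2 / M ^ 2 + 2 * A / M * S)
    <= rsum n (fun i => x i ^ 2 / a i) - S ^ 2 / Q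
  /\ rsum n (fun i => x i ^ 2 / a i) - S ^ 2 / Q
    <= / Q * (A ^ 2 / m ^ 2 + 2 * A / m * S).
Proof.
  intros P Q A m M S.
  assert (HP : 0 < P).
  { apply rsum_pos; auto. intros i Hi. specialize (hx i Hi). specialize (ha i Hi).
    unfold Rdiv. apply Rmult_lt_0_compat. apply sq_pos; auto. apply Rinv_0_lt_compat; auto. }
  assert (HQ : 0 < Q) by (apply rsum_pos; auto).
  set (R := sqrt (P * Q)).
  assert (HR : 0 < R) by (apply sqrt_lt_R0; nra).
  assert (HRR : R * R = P * Q) by (apply sqrt_sqrt; nra).
  set (p := fun i => x i ^ 2 / (a i * P)).
  set (q := fun i => a i / Q).
  set (t := fun i => Rabs (x i) / R).
  assert (Hp : forall i, (i < n)%nat -> 0 < p i).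
  { intros i Hi. specialize (hx i Hi). specialize (ha i Hi). unfold p.
    unfold Rdiv. apply Rmult_lt_0_compat. apply sq_pos; auto. apply Rinv_0_lt_compat; nra. }
  assert (Hq : forall i, (i < n)%nat -> 0 < q i).
  { intros i Hi. specialize (ha i Hi). unfold q. unfold Rdiv. apply Rmult_lt_0_compat; auto. apply Rinv_0_lt_compat; auto. }
  assert (Ht : forall i, 0 <= t i).
  { intros i. unfold t. unfold Rdiv. apply Rmult_le_pos. apply Rabs_pos. left; apply Rinv_0_lt_compat; auto. }
  assert (Htt : forall i, (i < n)%nat -> t i * t i = p i * q i).
  { intros i Hi. specialize (ha i Hi). unfold t, p, q.
    replace (Rabs (x i) / R * (Rabs (x i) / R)) with (Rabs (x i) ^ 2 / (R * R)) by (field; lra).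
    rewrite pow2_abs, HRR. field. lra. }
  assert (Sp : rsum n p = 1).
  { rewrite (rsum_ext n p (fun i => / P * (x i ^ 2 / a i))).
    rewrite rsum_scal. change (rsum n (fun i => x i ^ 2 / a i)) with P. field. lra.
    intros i Hi. specialize (ha i Hi). unfold p. field. lra. }
  assert (Sq : rsum n q = 1).
  { rewrite (rsum_ext n q (fun i => / Q * a i)).
    rewrite rsum_scal. change (rsum n a) with Q. field. lra.
    intros i Hi. unfold q. field. lra. }
  assert (St : rsum n t = S / R).
  { rewrite (rsum_ext n t (fun i => / R * Rabs (x i))).
    rewrite rsum_scal. change (rsum n (fun i => Rabs (x i))) with S. field. lra.
    intros i Hi. unfold t. field. lra. }
  assert (Slin : forall c, rsum n (fun i => c * (p i + q i - 2 * t i)) = c * (2 - 2 * (S / R))).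
  { intro c. rewrite rsum_scal.
    rewrite (rsum_ext n (fun i => p i + q i - 2 * t i) (fun i => p i + (q i + (-2) * t i))) by (intros; ring).
    rewrite rsum_plus, rsum_plus, rsum_scal, Sp, Sq, St. ring. }
  assert (HSR : S <= R).
  { assert (0 <= rsum n (fun i => 1 * (p i + q i - 2 * t i))).
    { apply rsum_nonneg. intros i Hi. assert (H := Htt i Hi). assert (H1 := Hp i Hi).
      assert (H2 := Hq i Hi). assert (H3 := Ht i). rewrite Rmult_1_l. apply amgm; auto. }
    rewrite Slin in H. assert (S / R <= 1) by lra.
    apply Rmult_le_compat_r with (r := R) in H0; [|lra].
    unfold Rdiv in H0. rewrite Rmult_assoc, Rinv_l in H0; lra. }
  assert (HS : 0 <= S) by (apply rsum_nonneg; intros; apply Rabs_pos).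
  assert (HAe : A = / 8 * R * rsum n (fun i => (p i - q i) ^ 2)) by reflexivity.
  assert (Hm : forall i, (i < n)%nat -> m <= p i /\ m <= q i).
  { intros i Hi. assert (H := rmin_le (n - 1) (fun i => Rmin (x i ^ 2 / (a i * P)) (a i / Q)) i ltac:(lia)).
    fold m in H. simpl in H. split; eapply Rle_trans; eauto. apply Rmin_l. apply Rmin_r. }
  assert (HM : forall i, (i < n)%nat -> p i <= M /\ q i <= M).
  { intros i Hi. assert (H := rmax_ge (n - 1) (fun i => Rmax (x i ^ 2 / (a i * P)) (a i / Q)) i ltac:(lia)).
    fold M in H. simpl in H. split; eapply Rle_trans; eauto. apply Rmax_l. apply Rmax_r. }
  assert (Hm0 : 0 < m).
  { apply rmin_pos. intros i Hi. apply Rmin_glb_lt; [apply (Hp i)|apply (Hq i)]; lia. }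
  assert (HM0 : 0 < M).
  { destruct (HM 0%nat ltac:(lia)). assert (H1 := Hp 0%nat ltac:(lia)). lra. }
  assert (Alo : m * (R - S) <= A).
  { rewrite HAe.
    assert (rsum n (fun i => 4 * m * (p i + q i - 2 * t i)) <= rsum n (fun i => (p i - q i) ^ 2)).
    { apply rsum_le. intros i Hi. destruct (Hm i Hi). apply key_lo; auto. }
    rewrite Slin in H.
    replace (m * (R - S)) with (/ 8 * R * (4 * m * (2 - 2 * (S / R)))) by (field; lra).
    apply Rmult_le_compat_l; auto. lra. }
  assert (Ahi : A <= M * (R - S)).
  { rewrite HAe.
    assert (rsum n (fun i => (p i - q i) ^ 2) <= rsum n (fun i => 4 * M * (p i + q i - 2 * t i))).
    { apply rsum_le. intros i Hi. destruct (HM i Hi). apply key_hi; auto. }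
    rewrite Slin in H.
    replace (M * (R - S)) with (/ 8 * R * (4 * M * (2 - 2 * (S / R)))) by (field; lra).
    apply Rmult_le_compat_l; auto. lra. }
  change (rsum n (fun i => x i ^ 2 / a i)) with P.
  replace (P - S ^ 2 / Q) with (/ Q * (R * R - S * S)) by (rewrite HRR; field; lra).
  assert (HQi : 0 <= / Q) by (left; apply Rinv_0_lt_compat; auto).
  split; apply Rmult_le_compat_l; auto.
  - set (y := A / M).
    assert (0 <= y <= R - S).
    { unfold y. split. unfold Rdiv. apply Rmult_le_pos. nra. left; apply Rinv_0_lt_compat; auto.
      apply Rmult_le_reg_r with M; auto. unfold Rdiv. rewrite Rmult_assoc, Rinv_l; lra. }
    replace (A ^ 2 / M ^ 2 + 2 * A / M * S) with (y * y + 2 * y * S) by (unfold y; field; lra).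
    nra.
  - set (y := A / m).
    assert (R - S <= y).
    { unfold y. apply Rmult_le_reg_r with m; auto. unfold Rdiv. rewrite Rmult_assoc, Rinv_l; lra. }
    replace (A ^ 2 / m ^ 2 + 2 * A / m * S) with (y * y + 2 * y * S) by (unfold y; field; lra).
    nra.
Qed.
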